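(* Let $\mathcal{A}$ be a commutative domain of essentially finite type over a field $K$ of arbitrary characteristic, $R$ a subalgebra of $\mathcal{D}(\mathcal{A})$ containing $\mathcal{A}$, and $S$ a multiplicative subset of $\mathcal{A}\setminus\{0\}$. Then $S$ is a (left and right) denominator set of $R$ consisting of regular elements, and $S^{-1}\mathcal{A}\subseteq S^{-1}R\subseteq S^{-1}\mathcal{D}(\mathcal{A})\cong\mathcal{D}(S^{-1}\mathcal{A})$. If, in addition, $S^{-1}R=S^{-1}\mathcal{D}(\mathcal{A})$, then $R$ is an essential left and right $R$-submodule of $\mathcal{D}(\mathcal{A})$.
   Context: Essentially finite type: a localization of a finitely generated commutative $K$-algebra. $\mathcal{D}(\mathcal{A})=\bigcup_{i\ge0}\mathcal{D}(\mathcal{A})_i\subseteq\mathrm{End}_K(\mathcal{A})$ with $\mathcal{D}(\mathcal{A})_{-1}=0$, $\mathcal{D}(\mathcal{A})_i=\{u\mid au-ua\in\mathcal{D}(\mathcal{A})_{i-1}\ \forall a\in\mathcal{A}\}$, $\mathcal{A}=\mathcal{D}(\mathcal{A})_0$. A submodule is essential if it has nonzero intersection with every nonzero submodule. *)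

(* Defs.v *)
From HB Require Import structures.
From mathcomp Require Import all_boot all_algebra.
Set Implicit Arguments. Unset Strict Implicit. Unset Printing Implicit Defensive.
Import GRing.Theory.
Local Open Scope ring_scope.

Section Defs.
Variable K : fieldType.

(* Operators on a commutative K-algebra T are functions T -> T; ring
   multiplication of operators is composition, addition is pointwise. *)
Definition zero_op (T : comAlgType K) : T -> T := fun _ => 0.
Definition add_op (T : comAlgType K) (u v : T -> T) : T -> T := fun x => u x + v x.
Definition opp_op (T : comAlgType K) (u : T -> T) : T -> T := fun x => - u x.
Definition scale_op (T : comAlgType K) (k : K) (u : T -> T) : T -> T := fun x => k *: u x.

Definition op_linear (T : comAlgType K) (u : T -> T) : Prop :=
  forall (k : K) (x y : T), u (k *: x + y) = k *: u x + u y.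

(* multiplication operator by a : the embedding T = D(T)_0 *)
Definition mulop (T : comAlgType K) (a : T) : T -> T := fun x => a * x.

Definition comm_op (T : comAlgType K) (a : T) (u : T -> T) : T -> T :=
  fun x => a * u x - u (a * x).

(* diffop_ord T n u  <->  u \in D(T)_n   (with D(T)_{-1} = 0) *)
Fixpoint diffop_ord (T : comAlgType K) (n : nat) (u : T -> T) : Prop :=
  op_linear u /\
  match n with
  | 0 => forall a : T, comm_op a u = @zero_op T
  | n'.+1 => forall a : T, diffop_ord n' (comm_op a u)
  end.

Definition diffop (T : comAlgType K) (u : T -> T) : Prop :=
  exists n, diffop_ord n u.

Definition is_domain (T : comAlgType K) : Prop :=
  forall x y : T, x * y = 0 -> x = 0 \/ y = 0.

Inductive in_gen_subalg (T : comAlgType K) (g : seq T) : T -> Prop :=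
  | gen_mem x : x \in g -> in_gen_subalg g x
  | gen_scal (k : K) : in_gen_subalg g (k%:A)
  | gen_add x y : in_gen_subalg g x -> in_gen_subalg g y -> in_gen_subalg g (x + y)
  | gen_mul x y : in_gen_subalg g x -> in_gen_subalg g y -> in_gen_subalg g (x * y).

(* T is a localization T = Tm^{-1} B of a finitely generated K-algebra B *)
Definition ess_finite_type (T : comAlgType K) : Prop :=
  exists (g : seq T) (Tm : T -> Prop),
    (forall t, Tm t -> in_gen_subalg g t) /\ Tm 1 /\
    (forall t u, Tm t -> Tm u -> Tm (t * u)) /\
    (forall t, Tm t -> exists v, t * v = 1) /\
    (forall a : T, exists b t v, in_gen_subalg g b /\ Tm t /\ t * v = 1 /\ a = b * v).

Definition mult_subset (T : comAlgType K) (S : T -> Prop) : Prop :=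
  S 1 /\ (forall s t, S s -> S t -> S (s * t)) /\ ~ S 0.

Definition subalg_D_containing (T : comAlgType K) (R : (T -> T) -> Prop) : Prop :=
  (forall u, R u -> diffop u) /\
  (forall a : T, R (mulop a)) /\
  (forall u v, R u -> R v -> R (add_op u v)) /\
  (forall u, R u -> R (opp_op u)) /\
  (forall (k : K) u, R u -> R (scale_op k u)) /\
  (forall u v, R u -> R v -> R (u \o v)).

Definition left_denominator (T : comAlgType K) (R : (T -> T) -> Prop) (S : T -> Prop) :=
  (forall s, S s -> R (mulop s)) /\
  (forall s t, S s -> S t -> S (s * t)) /\ S 1 /\
  (forall s r, S s -> R r ->
     exists s' r', S s' /\ R r' /\ mulop s' \o r = r' \o mulop s) /\
  (forall s r, S s -> R r -> r \o mulop s = @zero_op T ->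
     exists s', S s' /\ mulop s' \o r = @zero_op T).

Definition right_denominator (T : comAlgType K) (R : (T -> T) -> Prop) (S : T -> Prop) :=
  (forall s, S s -> R (mulop s)) /\
  (forall s t, S s -> S t -> S (s * t)) /\ S 1 /\
  (forall s r, S s -> R r ->
     exists s' r', S s' /\ R r' /\ r \o mulop s' = mulop s \o r') /\
  (forall s r, S s -> R r -> mulop s \o r = @zero_op T ->
     exists s', S s' /\ r \o mulop s' = @zero_op T).

Definition regular_in (T : comAlgType K) (R : (T -> T) -> Prop) (S : T -> Prop) :=
  forall s r, S s -> R r ->
    (mulop s \o r = @zero_op T -> r = @zero_op T) /\
    (r \o mulop s = @zero_op T -> r = @zero_op T).

Definition is_localization (A L : comAlgType K) (S : A -> Prop) (iota : A -> L) : Prop :=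
  (forall x y, iota (x + y) = iota x + iota y) /\
  (forall x y, iota (x * y) = iota x * iota y) /\
  (forall (k : K) x, iota (k *: x) = k *: iota x) /\
  iota 1 = 1 /\
  (forall x y, iota x = iota y -> x = y) /\
  (forall s, S s -> exists v, iota s * v = 1) /\
  (forall x : L, exists a s v, S s /\ iota s * v = 1 /\ x = iota a * v).

(* phi : D(A) -> D(L) exhibits D(L) = D(S^{-1}A) as the (left and right)
   ring of fractions S^{-1} D(A), compatibly with iota *)
Definition is_diffop_localization (A L : comAlgType K) (S : A -> Prop)
    (iota : A -> L) (phi : (A -> A) -> (L -> L)) : Prop :=
  (forall d, diffop d -> diffop (phi d)) /\
  (forall d, diffop d -> phi d \o iota = iota \o d) /\
  (forall u v, diffop u -> diffop v -> phi (add_op u v) = add_op (phi u) (phi v)) /\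
  (forall (k : K) u, diffop u -> phi (scale_op k u) = scale_op k (phi u)) /\
  (forall u v, diffop u -> diffop v -> phi (u \o v) = phi u \o phi v) /\
  phi id = id /\
  (forall u v, diffop u -> diffop v -> phi u = phi v -> u = v) /\
  (forall s, S s -> exists P, diffop P /\
      P \o phi (mulop s) = id /\ phi (mulop s) \o P = id) /\
  (forall P, diffop P -> exists s d, S s /\ diffop d /\ phi (mulop s) \o P = phi d) /\
  (forall P, diffop P -> exists s d, S s /\ diffop d /\ P \o phi (mulop s) = phi d).

(* S^{-1} R inside D(L) = S^{-1} D(A):  { phi(s)^{-1} phi(r) } *)
Definition loc_left (A L : comAlgType K) (S : A -> Prop) (R : (A -> A) -> Prop)
    (phi : (A -> A) -> (L -> L)) (P : L -> L) : Prop :=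
  exists s r, S s /\ R r /\ phi (mulop s) \o P = phi r.

(*  { phi(r) phi(s)^{-1} } *)
Definition loc_right (A L : comAlgType K) (S : A -> Prop) (R : (A -> A) -> Prop)
    (phi : (A -> A) -> (L -> L)) (P : L -> L) : Prop :=
  exists s r, S s /\ R r /\ P \o phi (mulop s) = phi r.

Definition mulops (A : comAlgType K) (u : A -> A) : Prop := exists a : A, u = mulop a.

Definition left_submod (A : comAlgType K) (R N : (A -> A) -> Prop) : Prop :=
  (forall n, N n -> diffop n) /\ N (@zero_op A) /\
  (forall m n, N m -> N n -> N (add_op m n)) /\
  (forall r n, R r -> N n -> N (r \o n)).

Definition right_submod (A : comAlgType K) (R N : (A -> A) -> Prop) : Prop :=
  (forall n, N n -> diffop n) /\ N (@zero_op A) /\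
  (forall m n, N m -> N n -> N (add_op m n)) /\
  (forall r n, R r -> N n -> N (n \o r)).

Definition essential_left (A : comAlgType K) (R : (A -> A) -> Prop) : Prop :=
  left_submod R R /\
  forall N, left_submod R N -> (exists n, N n /\ n <> @zero_op A) ->
    exists n, N n /\ R n /\ n <> @zero_op A.

Definition essential_right (A : comAlgType K) (R : (A -> A) -> Prop) : Prop :=
  right_submod R R /\
  forall N, right_submod R N -> (exists n, N n /\ n <> @zero_op A) ->
    exists n, N n /\ R n /\ n <> @zero_op A.

End Defs.

(* Main.v *)
Require Import Defs.
From HB Require Import structures.
From mathcomp Require Import all_boot all_algebra.
From mathcomp Require Import ring.
From Stdlib Require Import FunctionalExtensionality ClassicalEpsilon.
Set Implicit Arguments. Unset Strict Implicit. Unset Printing Implicit Defensive.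
Import GRing.Theory.
Local Open Scope ring_scope.

Lemma congr_fun (X Y : Type) (f g : X -> Y) : f = g -> forall x, f x = g x.
Proof. by move=> ->. Qed.
Section Gen.
Variable K : fieldType.
Variable T : comAlgType K.
Implicit Types (u v : T -> T) (a : T) (k : K).

Lemma lin_add u : op_linear u -> forall x y, u (x + y) = u x + u y.
Proof. by move=> h x y; have := h 1 x y; rewrite !scale1r. Qed.

Lemma lin0 u : op_linear u -> u 0 = 0.
Proof.
move=> h; have e := h 1 0 0; rewrite !scale1r addr0 in e.
by apply: (@addrI _ (u 0)); rewrite addr0 -e.
Qed.

Lemma lin_scale u : op_linear u -> forall k x, u (k *: x) = k *: u x.
Proof. by move=> h k x; have := h k x 0; rewrite !addr0 (lin0 h) addr0. Qed.

Lemma lin_opp u : op_linear u -> forall x, u (- x) = - u x.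
Proof. by move=> h x; rewrite -scaleN1r (lin_scale h) scaleN1r. Qed.

Lemma lin_sub u : op_linear u -> forall x y, u (x - y) = u x - u y.
Proof. by move=> h x y; rewrite (lin_add h) (lin_opp h). Qed.

Lemma lin_zero : op_linear (@zero_op K T).
Proof. by move=> k x y; rewrite /zero_op scaler0 addr0. Qed.

Lemma lin_addop u v : op_linear u -> op_linear v -> op_linear (add_op u v).
Proof.
move=> hu hv k x y; rewrite /add_op hu hv scalerDr.
by rewrite -!addrA; congr (_ + _); rewrite addrCA.
Qed.

Lemma lin_scaleop k u : op_linear u -> op_linear (scale_op k u).
Proof. by move=> hu c x y; rewrite /scale_op hu scalerDr !scalerA mulrC. Qed.

Lemma lin_oppop u : op_linear u -> op_linear (opp_op u).
Proof. by move=> hu c x y; rewrite /opp_op hu opprD scalerN. Qed.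

Lemma lin_comp u v : op_linear u -> op_linear v -> op_linear (u \o v).
Proof. by move=> hu hv c x y /=; rewrite hv hu. Qed.

Lemma lin_mulop a : op_linear (mulop a).
Proof. by move=> c x y; rewrite /mulop mulrDr scalerAr. Qed.

Lemma lin_id : @op_linear K T id.
Proof. by []. Qed.

Lemma lin_comm a u : op_linear u -> op_linear (comm_op a u).
Proof.
move=> hu c x y; rewrite /comm_op mulrDr -scalerAr !hu mulrDr -scalerAr scalerBr.
ring.
Qed.

Lemma comm_zero a : comm_op a (@zero_op K T) = @zero_op K T.
Proof. by apply: functional_extensionality => x; rewrite /comm_op /zero_op mulr0 subr0. Qed.

Lemma comm_addop a u v : comm_op a (add_op u v) = add_op (comm_op a u) (comm_op a v).
Proof. by apply: functional_extensionality => x; rewrite /comm_op /add_op; ring. Qed.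

Lemma comm_scaleop a k u : comm_op a (scale_op k u) = scale_op k (comm_op a u).
Proof.
by apply: functional_extensionality => x; rewrite /comm_op /scale_op scalerBr scalerAr.
Qed.

Lemma comm_oppop a u : comm_op a (opp_op u) = opp_op (comm_op a u).
Proof. by apply: functional_extensionality => x; rewrite /comm_op /opp_op; ring. Qed.

Lemma comm_comp a u v : op_linear u ->
  comm_op a (u \o v) = add_op (comm_op a u \o v) (u \o comm_op a v).
Proof.
move=> hu; apply: functional_extensionality => x.
by rewrite /comm_op /add_op /= lin_sub //; ring.
Qed.

Lemma dord_lin n u : diffop_ord n u -> op_linear u.
Proof. by case: n => [[]|n []]. Qed.

Lemma dord_zero n : diffop_ord n (@zero_op K T).
Proof.
elim: n => [|n IH]; (split; first exact: lin_zero); by move=> a; rewrite comm_zero.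
Qed.

Lemma dord_S n u : diffop_ord n u -> diffop_ord n.+1 u.
Proof.
elim: n u => [|n IH] u [hl hc]; split => // a.
  by rewrite hc; exact: dord_zero.
exact: IH (hc a).
Qed.

Lemma dord_le n m u : (n <= m)%N -> diffop_ord n u -> diffop_ord m u.
Proof.
move=> le; rewrite -(subnKC le); elim: (m - n)%N => [|k IH]; first by rewrite addn0.
by move=> h; rewrite addnS; apply: dord_S; apply: IH.
Qed.

Lemma dord_comm n a u : diffop_ord n u -> diffop_ord n (comm_op a u).
Proof.
case: n => [[hl hc]|n [hl hc]]; first by rewrite hc; exact: dord_zero.
exact: dord_S (hc a).
Qed.

Lemma dord_addop n u v : diffop_ord n u -> diffop_ord n v -> diffop_ord n (add_op u v).
Proof.
elim: n u v => [|n IH] u v [hu cu] [hv cv]; split; try exact: lin_addop.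
  by move=> a; rewrite comm_addop cu cv; apply: functional_extensionality => x;
     rewrite /add_op /zero_op addr0.
by move=> a; rewrite comm_addop; apply: IH (cu a) (cv a).
Qed.

Lemma dord_scaleop n k u : diffop_ord n u -> diffop_ord n (scale_op k u).
Proof.
elim: n u => [|n IH] u [hu cu]; split; try exact: lin_scaleop.
  by move=> a; rewrite comm_scaleop cu; apply: functional_extensionality => x;
     rewrite /scale_op /zero_op scaler0.
by move=> a; rewrite comm_scaleop; apply: IH (cu a).
Qed.

Lemma dord_oppop n u : diffop_ord n u -> diffop_ord n (opp_op u).
Proof.
elim: n u => [|n IH] u [hu cu]; split; try exact: lin_oppop.
  by move=> a; rewrite comm_oppop cu; apply: functional_extensionality => x;
     rewrite /opp_op /zero_op oppr0.
by move=> a; rewrite comm_oppop; apply: IH (cu a).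
Qed.

Lemma dord_mulop a : diffop_ord 0 (mulop a).
Proof.
split; first exact: lin_mulop.
by move=> b; apply: functional_extensionality => x; rewrite /comm_op /mulop /zero_op; ring.
Qed.

Lemma dord_id : @diffop_ord K T 0 id.
Proof.
have -> : (@id T) = mulop (1 : T) by apply: functional_extensionality => x; rewrite /mulop mul1r.
exact: dord_mulop.
Qed.

Lemma zero_comp u : (@zero_op K T) \o u = @zero_op K T.
Proof. by []. Qed.

Lemma comp_zero u : op_linear u -> u \o (@zero_op K T) = @zero_op K T.
Proof. by move=> hu; apply: functional_extensionality => x; rewrite /= /zero_op lin0. Qed.

Lemma dord_comp_aux (N : nat) : forall m n u v, (m + n <= N)%N ->
  diffop_ord m u -> diffop_ord n v -> diffop_ord (m + n) (u \o v).
Proof.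
elim: N => [|N IH] m n u v le du dv.
  move: le; rewrite leqn0 addn_eq0 => /andP[/eqP m0 /eqP n0]; subst m n.
  case: du => hu cu; case: dv => hv cv; split; first exact: lin_comp.
  move=> a; rewrite comm_comp // cu cv comp_zero //.
  by apply: functional_extensionality => x; rewrite /add_op /zero_op addr0.
have hu := dord_lin du; have hv := dord_lin dv.
case E: (m + n)%N => [|j].
  move: E => /eqP; rewrite addn_eq0 => /andP[/eqP m0 /eqP n0]; subst m n.
  have := IH 0%N 0%N u v (leq0n _) du dv; by [].
split; first exact: lin_comp.
move=> a; rewrite comm_comp //; apply: dord_addop.
  case: m E du le => [|m] E du le.
    by case: du => _ cu; rewrite cu zero_comp; exact: dord_zero.
  case: du => _ cu; rewrite addSn in E le; case: E => <-.
  by apply: IH (cu a) dv; rewrite -ltnS.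
case: n E dv le => [|n] E dv le.
  by case: dv => _ cv; rewrite cv comp_zero //; exact: dord_zero.
case: dv => _ cv; rewrite addnS in E le; case: E => <-.
by apply: IH du (cv a); rewrite -ltnS.
Qed.

Lemma dord_comp m n u v : diffop_ord m u -> diffop_ord n v -> diffop_ord (m + n) (u \o v).
Proof. exact: (@dord_comp_aux (m + n)). Qed.

Lemma dord_mull n a u : diffop_ord n u -> diffop_ord n (mulop a \o u).
Proof. by move=> h; have := dord_comp (dord_mulop a) h. Qed.

Lemma dord_mulr n a u : diffop_ord n u -> diffop_ord n (u \o mulop a).
Proof. by move=> h; have := dord_comp h (dord_mulop a); rewrite addn0. Qed.

Lemma diffop_addop u v : diffop u -> diffop v -> diffop (add_op u v).
Proof.
move=> [m hm] [n hn]; exists (maxn m n); apply: dord_addop.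
  exact: dord_le (leq_maxl m n) hm.
exact: dord_le (leq_maxr m n) hn.
Qed.

Lemma diffop_scaleop k u : diffop u -> diffop (scale_op k u).
Proof. by move=> [m hm]; exists m; apply: dord_scaleop. Qed.

Lemma diffop_oppop u : diffop u -> diffop (opp_op u).
Proof. by move=> [m hm]; exists m; apply: dord_oppop. Qed.

Lemma diffop_comp u v : diffop u -> diffop v -> diffop (u \o v).
Proof. by move=> [m hm] [n hn]; exists (m + n)%N; apply: dord_comp. Qed.

Lemma diffop_mulop a : diffop (mulop a).
Proof. by exists 0%N; apply: dord_mulop. Qed.

Lemma diffop_id : @diffop K T id.
Proof. by exists 0%N; apply: dord_id. Qed.

Lemma diffop_comm a u : diffop u -> diffop (comm_op a u).
Proof. by move=> [m hm]; exists m; apply: dord_comm. Qed.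

Lemma diffop_lin u : diffop u -> op_linear u.
Proof. by move=> [m hm]; apply: dord_lin hm. Qed.

Lemma dord0_mulop u : diffop_ord 0 u -> u = mulop (u 1).
Proof.
move=> [hu cu]; apply: functional_extensionality => x.
have := congr1 (fun f => f 1) (cu x); rewrite /comm_op /zero_op /mulop mulr1 => /eqP.
by rewrite subr_eq0 => /eqP <-; rewrite mulrC.
Qed.

Lemma comm_mul_gen (p q : T) u :
  comm_op (p * q) u = add_op (mulop p \o comm_op q u) (comm_op p u \o mulop q).
Proof.
by apply: functional_extensionality => x; rewrite /comm_op /add_op /mulop /= mulrA; ring.
Qed.

End Gen.
Section Ore.
Variable K : fieldType.
Variable A : comAlgType K.
Variable R : (A -> A) -> Prop.
Hypothesis HR : subalg_D_containing R.
Implicit Types (u v d : A -> A) (a s : A).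

Lemma R_diff u : R u -> diffop u.
Proof. by case: HR => h _; apply: h. Qed.
Lemma R_mulop a : R (mulop a).
Proof. by case: HR => _ [h _]; apply: h. Qed.
Lemma R_add u v : R u -> R v -> R (add_op u v).
Proof. by case: HR => _ [_ [h _]]; apply: h. Qed.
Lemma R_opp u : R u -> R (opp_op u).
Proof. by case: HR => _ [_ [_ [h _]]]; apply: h. Qed.
Lemma R_comp u v : R u -> R v -> R (u \o v).
Proof. by case: HR => _ [_ [_ [_ [_ h]]]]; apply: h. Qed.

Lemma R_comm a u : R u -> R (comm_op a u).
Proof.
move=> hu.
have -> : comm_op a u = add_op (mulop a \o u) (opp_op (u \o mulop a)).
  by apply: functional_extensionality => x.
by apply: R_add; [apply: R_comp => //; apply: R_mulop | apply: R_opp; apply: R_comp => //; apply: R_mulop].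
Qed.

Lemma left_ore_aux n : forall d, diffop_ord n d -> R d -> forall s,
  exists d', R d' /\ mulop (s ^+ n.+1) \o d = d' \o mulop s.
Proof.
elim: n => [|n IH] d hd Rd s.
  exists d; split => //; case: hd => _ cd.
  apply: functional_extensionality => x; have := congr_fun (cd s) x.
  rewrite /comm_op /zero_op /mulop /= expr1 => /eqP; rewrite subr_eq0 => /eqP //.
case: hd => hl cd.
have [e [Re he]] := IH (comm_op s d) (cd s) (R_comm s Rd) s.
exists (add_op (mulop (s ^+ n.+1) \o d) e); split.
  by apply: R_add => //; apply: R_comp => //; apply: R_mulop.
apply: functional_extensionality => x; have := congr_fun he x.
rewrite /comm_op /add_op /mulop /= => <-; rewrite exprS; ring.
Qed.

Lemma right_ore_aux n : forall d, diffop_ord n d -> R d -> forall s,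
  exists d', R d' /\ d \o mulop (s ^+ n.+1) = mulop s \o d'.
Proof.
elim: n => [|n IH] d hd Rd s.
  exists d; split => //; case: hd => _ cd.
  apply: functional_extensionality => x; have := congr_fun (cd s) x.
  rewrite /comm_op /zero_op /mulop /= expr1 => /eqP; rewrite subr_eq0 => /eqP //.
case: hd => hl cd.
have [e [Re he]] := IH (comm_op s d) (cd s) (R_comm s Rd) s.
exists (add_op (d \o mulop (s ^+ n.+1)) (opp_op e)); split.
  apply: R_add; last by apply: R_opp.
  by apply: R_comp => //; apply: R_mulop.
apply: functional_extensionality => x; have := congr_fun he x.
rewrite /comm_op /add_op /opp_op /mulop /= => h.
rewrite exprS -mulrA.
have -> : d (s * (s ^+ n.+1 * x)) = s * d (s ^+ n.+1 * x) - s * e x by rewrite -h; ring.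
ring.
Qed.

Hypothesis Hdom : is_domain A.

Lemma reg_right n : forall d, diffop_ord n d -> forall s, s != 0 ->
  d \o mulop s = @zero_op K A -> d = @zero_op K A.
Proof.
elim: n => [|n IH] d hd s s0 h.
  have e := dord0_mulop hd.
  have hs : d 1 * s = 0.
    have := congr_fun h 1; rewrite /= /zero_op /mulop mulr1 => <-.
    by rewrite {2}e /mulop mulrC.
  case: (Hdom hs) => [d1|s00]; last by move: s0; rewrite s00 eqxx.
  apply: functional_extensionality => x; rewrite e d1 /mulop /zero_op.
  exact: mul0r.
case: hd => hl cd.
have c0 : comm_op s d = @zero_op K A.
  apply: (IH _ (cd s) s s0); apply: functional_extensionality => x.
  rewrite /comm_op /mulop /zero_op /=.
  have := congr_fun h x; have := congr_fun h (s * x).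
  rewrite /= /mulop /zero_op => -> ->; ring.
apply: functional_extensionality => x.
have := congr_fun c0 x; have := congr_fun h x.
rewrite /comm_op /mulop /zero_op /= => -> ; rewrite subr0 => /Hdom [|] //.
by move=> s00; move: s0; rewrite s00 eqxx.
Qed.

Lemma reg_left d s : s != 0 -> mulop s \o d = @zero_op K A -> d = @zero_op K A.
Proof.
move=> s0 h; apply: functional_extensionality => x.
have := congr_fun h x; rewrite /= /mulop /zero_op => /Hdom [|] //.
by move=> s00; move: s0; rewrite s00 eqxx.
Qed.

End Ore.
Lemma choice_fun (X Y : Type) (P : X -> Y -> Prop) :
  (forall x, exists y, P x y) -> exists f : X -> Y, forall x, P x (f x).
Proof.
move=> h; exists (fun x => proj1_sig (constructive_indefinite_description _ (h x))).
by move=> x; case: (constructive_indefinite_description _ (h x)).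
Qed.

Section Loc.
Variable K : fieldType.
Variables A L : comAlgType K.
Variable S : A -> Prop.
Variable iota : A -> L.
Hypothesis Hloc : is_localization S iota.
Hypothesis HS : mult_subset S.
Implicit Types (d u : A -> A) (D P Q : L -> L) (a b c s t : A) (x y w : L).

Lemma iotaD a b : iota (a + b) = iota a + iota b.
Proof. by case: Hloc. Qed.
Lemma iotaM a b : iota (a * b) = iota a * iota b.
Proof. by case: Hloc => _ []. Qed.
Lemma iotaZ k a : iota (k *: a) = k *: iota a.
Proof. by case: Hloc => _ [_ []]. Qed.
Lemma iota1 : iota 1 = 1.
Proof. by case: Hloc => _ [_ [_ []]]. Qed.
Lemma iota_inj a b : iota a = iota b -> a = b.
Proof. by case: Hloc => _ [_ [_ [_ []]]] h _; apply: h. Qed.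
Lemma iota_inv s : S s -> exists v, iota s * v = 1.
Proof. by case: Hloc => _ [_ [_ [_ [_ []]]]] h _; apply: h. Qed.
Lemma iota_rep x : exists a s v, S s /\ iota s * v = 1 /\ x = iota a * v.
Proof. by case: Hloc => _ [_ [_ [_ [_ []]]]] _ h; apply: h. Qed.
Lemma iota0 : iota 0 = 0.
Proof.
have := iotaD 0 0; rewrite addr0 => e.
by apply: (@addrI _ (iota 0)); rewrite addr0 -e.
Qed.
Lemma iotaN a : iota (- a) = - iota a.
Proof. by apply/eqP; rewrite -subr_eq0 opprK -iotaD addNr iota0. Qed.
Lemma iotaB a b : iota (a - b) = iota a - iota b.
Proof. by rewrite iotaD iotaN. Qed.

Lemma S1 : S 1. Proof. by case: HS. Qed.
Lemma SM s t : S s -> S t -> S (s * t). Proof. by case: HS => _ [h _]; apply: h. Qed.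

Lemma lcm x y p q m : p = q -> x - y = m * (q - p) -> x = y.
Proof. by move=> -> h; apply/eqP; rewrite -subr_eq0 h subrr mulr0. Qed.

Lemma unit_mul x w y : x * w = 1 -> x * (w * y) = y.
Proof. by move=> h; rewrite mulrA h mul1r. Qed.

Definition extends D d := forall a, D (iota a) = iota (d a).

Lemma uniq0 n : forall D, diffop_ord n D -> (forall a, D (iota a) = 0) -> D = @zero_op K L.
Proof.
elim: n => [|n IH] D hD h0.
  rewrite (dord0_mulop hD) -iota1 h0; apply: functional_extensionality => x.
  by rewrite /mulop /zero_op mul0r.
case: hD => hl cD.
have c0 : forall a, comm_op (iota a) D = @zero_op K L.
  move=> a; apply: (IH _ (cD (iota a))) => b.
  by rewrite /comm_op -iotaM !h0 mulr0 subr0.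
apply: functional_extensionality => x.
have [b [s [v [Ss [hv ->]]]]] := iota_rep x.
have := congr_fun (c0 s) (iota b * v); rewrite /comm_op /zero_op.
rewrite mulrCA hv mulr1 h0 subr0 => h.
rewrite /zero_op -[D _]mul1r -hv mulrC mulrA [D _ * _]mulrC h mul0r //.
Qed.

Lemma uniq D1 D2 d : diffop D1 -> diffop D2 -> extends D1 d -> extends D2 d -> D1 = D2.
Proof.
move=> [m h1] [n h2] e1 e2.
have h : diffop_ord (maxn m n) (add_op D1 (opp_op D2)).
  apply: dord_addop; first exact: dord_le (leq_maxl m n) h1.
  by apply: dord_oppop; exact: dord_le (leq_maxr m n) h2.
have z := uniq0 h.
have {}z : add_op D1 (opp_op D2) = @zero_op K L.
  by apply: z => a; rewrite /add_op /opp_op e1 e2 subrr.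
apply: functional_extensionality => x; have := congr_fun z x.
by rewrite /add_op /opp_op /zero_op => /eqP; rewrite subr_eq0 => /eqP.
Qed.

Lemma ext_add D1 D2 d1 d2 : extends D1 d1 -> extends D2 d2 ->
  extends (add_op D1 D2) (add_op d1 d2).
Proof. by move=> e1 e2 a; rewrite /add_op e1 e2 iotaD. Qed.
Lemma ext_opp D d : extends D d -> extends (opp_op D) (opp_op d).
Proof. by move=> e a; rewrite /opp_op e iotaN. Qed.
Lemma ext_scale k D d : extends D d -> extends (scale_op k D) (scale_op k d).
Proof. by move=> e a; rewrite /scale_op e iotaZ. Qed.
Lemma ext_comp D1 D2 d1 d2 : extends D1 d1 -> extends D2 d2 ->
  extends (D1 \o D2) (d1 \o d2).
Proof. by move=> e1 e2 a /=; rewrite e2 e1. Qed.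
Lemma ext_mulop a : extends (mulop (iota a)) (mulop a).
Proof. by move=> b; rewrite /mulop iotaM. Qed.
Lemma ext_id : extends id id.
Proof. by []. Qed.
Lemma ext_comm D d a : extends D d -> extends (comm_op (iota a) D) (comm_op a d).
Proof. by move=> e b; rewrite /comm_op -iotaM !e iotaB iotaM. Qed.
Lemma ext_zero : extends (@zero_op K L) (@zero_op K A).
Proof. by move=> a; rewrite /zero_op iota0. Qed.


Lemma ucancel x w y z : x * w = 1 -> x * y = x * z -> y = z.
Proof.
move=> h e; rewrite -[y]mul1r -[z]mul1r -h ![x * w]mulrC -!mulrA e //.
Qed.

Lemma ext_exists n : forall d, diffop_ord n d -> exists D, diffop_ord n D /\ extends D d.
Proof.
elim: n => [|n IH] d hd.
  exists (mulop (iota (d 1))); split; first exact: dord_mulop.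
  by move=> a; rewrite /mulop (congr_fun (dord0_mulop hd) a) /mulop iotaM.
case: hd => hl cd.
have [E hE] := choice_fun (fun a => IH _ (cd a)).
have Eo a : diffop_ord n (E a) by case: (hE a).
have Ee a : extends (E a) (comm_op a d) by case: (hE a).
have Ed a : diffop (E a) by exists n.
have El a : op_linear (E a) by apply: dord_lin (Eo a).
have E1 : E 1 = @zero_op K L.
  apply: (uniq0 (Eo 1)) => b; rewrite Ee /comm_op !mul1r subrr iota0 //.
have Emul s t : E (s * t) = add_op (mulop (iota s) \o E t) (E s \o mulop (iota t)).
  apply: (uniq (d := comm_op (s * t) d)) => //.
    apply: diffop_addop; apply: diffop_comp => //; exact: diffop_mulop.
  rewrite comm_mul_gen; apply: ext_add; apply: ext_comp => //; exact: ext_mulop.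
have Ecomm c s : comm_op (iota c) (E s) = comm_op (iota s) (E c).
  apply: (uniq (d := comm_op c (comm_op s d))); try exact: diffop_comm.
    exact: ext_comm.
  have -> : comm_op c (comm_op s d) = comm_op s (comm_op c d).
    apply: functional_extensionality => x; rewrite /comm_op (mulrCA s c x); ring.
  exact: ext_comm.
have [r hr] := choice_fun (fun x =>
  (let: ex_intro a (ex_intro s (ex_intro v h)) := iota_rep x in
   ex_intro _ (a, s, v) h) : exists p : A * A * L,
     S p.1.2 /\ iota p.1.2 * p.2 = 1 /\ x = iota p.1.1 * p.2).
pose D := fun x => (r x).2 * (iota (d (r x).1.1) + E (r x).1.2 x).
have WD x b s v : S s -> iota s * v = 1 -> x = iota b * v ->
    D x = v * (iota (d b) + E s x).
  move=> Ss hs hx; rewrite /D; move: (hr x); case: (r x) => [[b' s'] v'] /= [Ss' [hs' hx']].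
  have xs : iota s * x = iota b by rewrite hx mulrCA hs mulr1.
  have xs' : iota s' * x = iota b' by rewrite hx' mulrCA hs' mulr1.
  have bb : s * b' = s' * b by apply: iota_inj; rewrite !iotaM -xs -xs' mulrCA.
  have key : E (s' * s) x = E (s * s') x by rewrite mulrC.
  rewrite !Emul /add_op /mulop /= xs xs' !Ee /comm_op bb !iotaB !iotaM in key.
  apply: (@ucancel (iota (s * s')) (v * v')).
    by rewrite iotaM mulrACA hs hs' mulr1.
  rewrite iotaM -!mulrA (unit_mul _ hs') mulrCA (unit_mul _ hs).
  apply: (lcm (m := 1) key); ring.
have Dext : extends D d.
  move=> a; rewrite (WD (iota a) a 1 1 S1) ?iota1 ?mulr1 // E1 /zero_op addr0 mul1r //.
have Dcomm c : comm_op (iota c) D = E c.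
  apply: functional_extensionality => x.
  have [b [s [v [Ss [hs hx]]]]] := iota_rep x.
  have xs : iota s * x = iota b by rewrite hx mulrCA hs mulr1.
  rewrite /comm_op (WD x b s v) // (WD (iota c * x) (c * b) s v) //; last first.
    by rewrite hx iotaM mulrA.
  have key := congr_fun (Ecomm c s) x.
  rewrite /comm_op xs Ee /comm_op iotaB !iotaM in key.
  rewrite -[E c x]mul1r -hs.
  apply: (lcm (m := - v) key); ring.
have Dlin : op_linear D.
  move=> k x y.
  have [b [s [v [Ss [hs hx]]]]] := iota_rep x.
  have [b' [s' [v' [Ss' [hs' hy]]]]] := iota_rep y.
  have hss : iota (s * s') * (v * v') = 1 by rewrite iotaM mulrACA hs hs' mulr1.
  have hx' : x = iota (b * s') * (v * v').
    by rewrite hx iotaM -mulrA (mulrCA (iota s')) hs' mulr1.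
  have hy' : y = iota (b' * s) * (v * v').
    by rewrite hy iotaM -mulrA (mulrA (iota s)) hs mul1r.
  have hxy : k *: x + y = iota (k *: (b * s') + b' * s) * (v * v').
    by rewrite iotaD iotaZ mulrDl -scalerAl -hx' -hy'.
  rewrite (WD _ _ _ _ (SM Ss Ss') hss hxy) (WD _ _ _ _ (SM Ss Ss') hss hx').
  rewrite (WD _ _ _ _ (SM Ss Ss') hss hy').
  rewrite (lin_add hl) (lin_scale hl) (El _) iotaD iotaZ.
  by rewrite scalerAr -mulrDr scalerDr addrACA.
exists D; split => //; split => // y.
have [c [t [w [St [ht hy]]]]] := iota_rep y.
have hw : comm_op w D = opp_op (mulop w \o E t \o mulop w).
  apply: functional_extensionality => x.
  have key := congr_fun (Dcomm t) (w * x).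
  rewrite /comm_op (unit_mul _ ht) in key.
  rewrite /comm_op /opp_op /mulop /= -[D (w * x)]mul1r -ht.
  apply: (lcm (m := w) key); ring.
rewrite hy comm_mul_gen hw Dcomm; apply: dord_addop.
  by apply: dord_mull; apply: dord_oppop; apply: dord_mulr; apply: dord_mull.
by apply: dord_mulr.
Qed.
Definition phi (d : A -> A) : L -> L :=
  epsilon (inhabits id) (fun D => diffop D /\ extends D d).

Lemma phi_spec d : diffop d -> diffop (phi d) /\ extends (phi d) d.
Proof.
move=> [n hd]; rewrite /phi.
apply: (epsilon_spec (inhabits id) (fun D => diffop D /\ extends D d)).
have [D [hD e]] := ext_exists hd; exists D; split => //; by exists n.
Qed.

Lemma phi_eq d D : diffop d -> diffop D -> extends D d -> phi d = D.
Proof.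
move=> hd hD e; have [h1 h2] := phi_spec hd; exact: uniq h1 hD h2 e.
Qed.

Lemma phi_mulop a : phi (mulop a) = mulop (iota a).
Proof. apply: phi_eq; [exact: diffop_mulop | exact: diffop_mulop | exact: ext_mulop]. Qed.

Lemma restrict n : forall P, diffop_ord n P -> (forall a, exists b, P (iota a) = iota b) ->
  exists d, diffop_ord n d /\ extends P d.
Proof.
elim: n => [|n IH] P hP hv; have [f hf] := choice_fun hv;
  have hl : op_linear f by (move=> k x y; apply: iota_inj;
    rewrite -hf iotaD iotaZ (dord_lin hP) !hf iotaD iotaZ).
  exists f; split => //; split => // a; apply: functional_extensionality => x.
  apply: iota_inj; have := ext_comm a hf x; case: hP => _ ->.
  by rewrite /zero_op iota0.
exists f; split => //; split => // a.
have e := ext_comm a hf.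
have [d' [hd' e']] := IH _ (proj2 hP (iota a)) (fun b => ex_intro _ _ (e b)).
suff -> : comm_op a f = d' by [].
apply: functional_extensionality => x; apply: iota_inj; by rewrite -e -e'.
Qed.

Definition bnd s P := forall a, exists b, iota s * P (iota a) = iota b.

Lemma bnd_mull s t P : bnd s P -> bnd (t * s) P.
Proof. by move=> h a; have [b hb] := h a; exists (t * b); rewrite iotaM -mulrA hb iotaM. Qed.

Lemma bounded (hA : ess_finite_type A) n : forall P, diffop_ord n P -> exists s, S s /\ bnd s P.
Proof.
case: hA => g [Tm [hTg [hT1 [hTM [hTinv hArep]]]]].
elim: n => [|n IH] P hP.
  have [c [s [v [Ss [hs hc]]]]] := iota_rep (P 1).
  exists s; split => // a; exists (c * a).
  rewrite (congr_fun (dord0_mulop hP) (iota a)) /mulop hc iotaM.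
  apply: (lcm (m := - (iota c * iota a)) hs); ring.
case: hP => hl cP.
have [s1 [Ss1 h1]] : exists s1, S s1 /\ forall x : A, x \in g -> bnd s1 (comm_op (iota x) P).
  elim: g {hTg hArep} => [|x l [sl [Ssl hl']]].
    by exists 1; split; [exact: S1 | by []].
  have [sx [Ssx hx]] := IH _ (cP (iota x)).
  exists (sx * sl); split; first exact: SM.
  move=> y; rewrite in_cons => /orP [/eqP -> | yl].
    by rewrite mulrC; apply: bnd_mull.
  by apply: bnd_mull; apply: hl'.
have C1 : forall x : A, in_gen_subalg g x -> bnd s1 (comm_op (iota x) P).
  move=> x; elim => {x} [x xg | k | x y _ hx _ hy | x y _ hx _ hy].
  - exact: h1.
  - move=> a; exists 0; rewrite iota0 /comm_op iotaZ iota1 mulr_algl.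
    by rewrite -scalerAl mul1r (lin_scale hl) subrr mulr0.
  - move=> a; have [bx ebx] := hx a; have [by_ eby] := hy a.
    exists (bx + by_); rewrite (iotaD bx) -ebx -eby /comm_op (iotaD x) !mulrDl (lin_add hl); ring.
  - move=> a; have [bx ebx] := hx (y * a); have [by_ eby] := hy a.
    exists (x * by_ + bx); rewrite (iotaD (x * by_)) (iotaM x by_) -ebx -eby iotaM comm_mul_gen.
    rewrite /add_op /mulop /= (iotaM y a); ring.
have [c0 [s0 [v0 [Ss0 [hs0 hc0]]]]] := iota_rep (P 1).
have C2 : forall x : A, in_gen_subalg g x -> exists b, iota (s0 * s1) * P (iota x) = iota b.
  move=> x hx; have [b hb] := C1 x hx 1.
  exists (s1 * x * c0 - s0 * b).
  have e : P (iota x) = iota x * P 1 - comm_op (iota x) P (iota 1).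
    by rewrite /comm_op -iotaM mulr1 iota1; ring.
  rewrite e hc0 iotaB !iotaM -hb iota1.
  apply: (lcm (m := - (iota s1 * iota x * iota c0)) hs0); rewrite /comm_op; ring.
exists (s0 * s1); split; first exact: SM.
move=> a; have [b [t [v [hb [Tt [htv ha]]]]]] := hArep a.
have [bt hbt] := C1 t (hTg t Tt) a.
have [bb hbb] := C2 b hb.
have tab : t * a = b by rewrite ha mulrCA htv mulr1.
exists (v * (s0 * bt + bb)).
have htv' : iota t * iota v = 1 by rewrite -iotaM htv iota1.
rewrite !iotaM iotaD iotaM -hbt -hbb /comm_op -(iotaM t a) tab (iotaM s0 s1).
apply: (lcm (m := iota s0 * iota s1 * P (iota a)) htv'); ring.
Qed.

Lemma left_clause (hA : ess_finite_type A) P : diffop P ->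
  exists s d, S s /\ diffop d /\ phi (mulop s) \o P = phi d.
Proof.
move=> [n hP]; have [s [Ss hs]] := bounded hA hP.
have hQ := dord_mull (iota s) hP.
have [d [hd e]] := restrict hQ hs.
exists s, d; split => //; split; first by exists n.
rewrite phi_mulop; symmetry; apply: phi_eq => //; by exists n.
Qed.

End Loc.
Section Main.
Variable K : fieldType.
Variables A L : comAlgType K.
Variable S : A -> Prop.
Variable iota : A -> L.
Variable R : (A -> A) -> Prop.
Hypothesis Hdom : is_domain A.
Hypothesis HR : subalg_D_containing R.
Hypothesis HS : mult_subset S.
Hypothesis Hloc : is_localization S iota.
Implicit Types (d u v r : A -> A) (P Q : L -> L) (a s t : A).

Lemma S_exp s n : S s -> S (s ^+ n).
Proof.
move=> Ss; elim: n => [|n IH]; first by rewrite expr0; case: HS.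
by rewrite exprS; case: HS => _ [h _]; apply: h.
Qed.

Lemma S_nz s : S s -> s != 0.
Proof. by move=> Ss; apply/eqP => e; case: HS => _ [_ h]; apply: h; rewrite -e. Qed.

Lemma Rl_ore s r : S s -> R r ->
  exists s' r', S s' /\ R r' /\ mulop s' \o r = r' \o mulop s.
Proof.
move=> Ss Rr; have [n hn] := R_diff HR Rr.
have [d' [Rd e]] := left_ore_aux HR hn Rr s.
by exists (s ^+ n.+1), d'; split => //; apply: S_exp.
Qed.

Lemma Rr_ore s r : S s -> R r ->
  exists s' r', S s' /\ R r' /\ r \o mulop s' = mulop s \o r'.
Proof.
move=> Ss Rr; have [n hn] := R_diff HR Rr.
have [d' [Rd e]] := right_ore_aux HR hn Rr s.
by exists (s ^+ n.+1), d'; split => //; apply: S_exp.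
Qed.

Notation ph := (phi iota).

Lemma ph_d d : diffop d -> diffop (ph d).
Proof. by move=> h; case: (phi_spec Hloc HS h). Qed.
Lemma ph_e d : diffop d -> extends iota (ph d) d.
Proof. by move=> h; case: (phi_spec Hloc HS h). Qed.

Lemma ph_add u v : diffop u -> diffop v -> ph (add_op u v) = add_op (ph u) (ph v).
Proof.
move=> hu hv; apply: (phi_eq Hloc HS); first exact: diffop_addop.
  by apply: diffop_addop; apply: ph_d.
by apply: (ext_add Hloc); apply: ph_e.
Qed.
Lemma ph_scale k u : diffop u -> ph (scale_op k u) = scale_op k (ph u).
Proof.
move=> hu; apply: (phi_eq Hloc HS); first exact: diffop_scaleop.
  by apply: diffop_scaleop; apply: ph_d.
by apply: (ext_scale Hloc); apply: ph_e.
Qed.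
Lemma ph_opp u : diffop u -> ph (opp_op u) = opp_op (ph u).
Proof.
move=> hu; apply: (phi_eq Hloc HS); first exact: diffop_oppop.
  by apply: diffop_oppop; apply: ph_d.
by apply: (ext_opp Hloc); apply: ph_e.
Qed.
Lemma ph_comp u v : diffop u -> diffop v -> ph (u \o v) = ph u \o ph v.
Proof.
move=> hu hv; apply: (phi_eq Hloc HS); first exact: diffop_comp.
  by apply: diffop_comp; apply: ph_d.
by apply: ext_comp; apply: ph_e.
Qed.
Lemma ph_id : ph id = id.
Proof. apply: (phi_eq Hloc HS); [exact: diffop_id | exact: diffop_id | exact: (ext_id iota)]. Qed.
Lemma ph_mulop a : ph (mulop a) = mulop (iota a).
Proof. exact: (phi_mulop Hloc HS). Qed.
Lemma ph_inj u v : diffop u -> diffop v -> ph u = ph v -> u = v.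
Proof.
move=> hu hv e; apply: functional_extensionality => a; apply: (iota_inj Hloc).
by rewrite -(ph_e hu) -(ph_e hv) e.
Qed.

Lemma inv_l s P Q : S s -> ph (mulop s) \o P = Q -> exists w, iota s * w = 1 /\ P = mulop w \o Q.
Proof.
move=> Ss e; have [w hw] := iota_inv Hloc Ss; exists w; split => //.
rewrite -e ph_mulop; apply: functional_extensionality => x.
by rewrite /= /mulop mulrA (mulrC w) hw mul1r.
Qed.

Lemma inv_r s P Q : S s -> P \o ph (mulop s) = Q -> exists w, iota s * w = 1 /\ P = Q \o mulop w.
Proof.
move=> Ss e; have [w hw] := iota_inv Hloc Ss; exists w; split => //.
rewrite -e ph_mulop; apply: functional_extensionality => x.
by rewrite /= /mulop mulrA hw mul1r.
Qed.

Lemma R_d r : R r -> diffop r.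
Proof. exact: (@R_diff _ _ R HR r). Qed.

Lemma left_to_right P : loc_left S R ph P -> loc_right S R ph P.
Proof.
move=> [s [r [Ss [Rr e]]]]; have [w [hw ->]] := inv_l Ss e.
have [s' [r' [Ss' [Rr' e']]]] := Rr_ore Ss Rr.
exists s', r'; split => //; split => //.
have hr := R_d Rr; have hr' := R_d Rr'; have hs := diffop_mulop s; have hs' := diffop_mulop s'.
have -> : mulop w \o ph r \o ph (mulop s') = mulop w \o ph (r \o mulop s') by rewrite (ph_comp hr hs').
rewrite e' (ph_comp hs hr') ph_mulop; apply: functional_extensionality => x.
by rewrite /= /mulop mulrA (mulrC w) hw mul1r.
Qed.

Lemma right_to_left P : loc_right S R ph P -> loc_left S R ph P.
Proof.
move=> [s [r [Ss [Rr e]]]]; have [w [hw ->]] := inv_r Ss e.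
have [s' [r' [Ss' [Rr' e']]]] := Rl_ore Ss Rr.
exists s', r'; split => //; split => //.
have hr := R_d Rr; have hr' := R_d Rr'; have hs := diffop_mulop s; have hs' := diffop_mulop s'.
have -> : ph (mulop s') \o (ph r \o mulop w) = ph (mulop s' \o r) \o mulop w by rewrite (ph_comp hs' hr).
rewrite e' (ph_comp hr' hs) ph_mulop; apply: functional_extensionality => x.
by rewrite /= /mulop mulrA hw mul1r.
Qed.

Lemma loc_diffop P : loc_left S R ph P -> diffop P.
Proof.
move=> [s [r [Ss [Rr e]]]]; have [w [hw ->]] := inv_l Ss e.
by apply: diffop_comp; [exact: diffop_mulop | apply: ph_d; apply: R_d].
Qed.

Lemma loc_add P Q : loc_left S R ph P -> loc_left S R ph Q -> loc_left S R ph (add_op P Q).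
Proof.
move=> [s [r [Ss [Rr e]]]] [t [r' [St [Rr' e']]]].
exists (s * t), (add_op (mulop t \o r) (mulop s \o r')); split; first by case: HS => _ [h _]; apply: h.
split; first by apply: (R_add HR); apply: (R_comp HR) => //; apply: (R_mulop HR).
have hr := R_d Rr; have hr' := R_d Rr'.
have hmt := diffop_comp (diffop_mulop t) hr; have hms := diffop_comp (diffop_mulop s) hr'.
rewrite (ph_add hmt hms) (ph_comp (diffop_mulop t) hr) (ph_comp (diffop_mulop s) hr').
rewrite !ph_mulop; rewrite ph_mulop in e; rewrite ph_mulop in e'.
apply: functional_extensionality => x.
have h1 := congr_fun e x; have h2 := congr_fun e' x.
rewrite /add_op /mulop /= in h1 h2 *.
by rewrite -h1 -h2 (iotaM Hloc); ring.
Qed.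

Lemma loc_opp P : loc_left S R ph P -> loc_left S R ph (opp_op P).
Proof.
move=> [s [r [Ss [Rr e]]]]; exists s, (opp_op r); split => //.
split; first exact: (R_opp HR Rr).
rewrite ph_opp; last exact: R_d.
rewrite ph_mulop in e *; apply: functional_extensionality => x.
have h1 := congr_fun e x; rewrite /opp_op /mulop /= in h1 *.
by rewrite -h1 mulrN.
Qed.

Lemma loc_comp P Q : loc_left S R ph P -> loc_left S R ph Q -> loc_left S R ph (P \o Q).
Proof.
move=> [s [r [Ss [Rr e]]]] [t [r' [St [Rr' e']]]].
have [t' [r'' [St' [Rr'' e'']]]] := Rl_ore St Rr.
exists (t' * s), (r'' \o r'); split; first by case: HS => _ [h _]; apply: h.
split; first exact: (R_comp HR Rr'' Rr').
have hr := R_d Rr; have hr' := R_d Rr'; have hr'' := R_d Rr''.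
have := congr1 ph e''; rewrite (ph_comp (diffop_mulop t') hr) (ph_comp hr'' (diffop_mulop t)).
rewrite (ph_comp hr'' hr') !ph_mulop; rewrite ph_mulop in e; rewrite ph_mulop in e'.
move=> e3; apply: functional_extensionality => x.
have h1 := congr_fun e (Q x); have h2 := congr_fun e' x; have h3 := congr_fun e3 (Q x).
rewrite /mulop /= in h1 h2 h3 *.
by rewrite (iotaM Hloc) -mulrA h1 h3 h2.
Qed.

End Main.
Theorem lemma3p3 (K : fieldType) (A : comAlgType K)
    (R : (A -> A) -> Prop) (S : A -> Prop) :
  is_domain A -> ess_finite_type A ->
  subalg_D_containing R -> mult_subset S ->
  (* S is a left and right denominator set of R of regular elements *)
  (left_denominator R S /\ right_denominator R S /\ regular_in R S) /\
  (* for the localization L = S^{-1}A: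
     S^{-1}A <= S^{-1}R <= S^{-1}D(A) ~= D(S^{-1}A), and the final claim *)
  (forall (L : comAlgType K) (iota : A -> L), is_localization S iota ->
    exists phi : (A -> A) -> (L -> L),
      is_diffop_localization S iota phi /\
      (forall P, loc_left S R phi P <-> loc_right S R phi P) /\
      (forall P, loc_left S (@mulops K A) phi P -> loc_left S R phi P) /\
      (forall P, loc_left S R phi P -> diffop P) /\
      loc_left S R phi id /\
      (forall P Q, loc_left S R phi P -> loc_left S R phi Q ->
         loc_left S R phi (add_op P Q)) /\
      (forall P, loc_left S R phi P -> loc_left S R phi (opp_op P)) /\
      (forall P Q, loc_left S R phi P -> loc_left S R phi Q ->
         loc_left S R phi (P \o Q)) /\
      ((forall P, diffop P -> loc_left S R phi P) ->
         essential_left R /\ essential_right R)).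
Proof.
move=> Hdom HA HR HS.
have Snz := S_nz HS.
have S1' : S 1 by case: HS.
have SM' : forall s t, S s -> S t -> S (s * t) by case: HS => _ [h _].
split.
  split; [|split].
  - split; first by move=> s _; exact: (R_mulop HR).
    split => //; split => //; split; first by move=> s r Ss Rr; exact: Rl_ore.
    move=> s r Ss Rr h; exists 1; split => //.
    have [n hn] := R_diff HR Rr.
    rewrite (reg_right Hdom hn (Snz s Ss) h).
    by apply: functional_extensionality => x; rewrite /= /mulop /zero_op mulr0.
  - split; first by move=> s _; exact: (R_mulop HR).
    split => //; split => //; split; first by move=> s r Ss Rr; exact: Rr_ore.
    move=> s r Ss Rr h; exists 1; split => //.
    by rewrite (reg_left Hdom (Snz s Ss) h).
  - move=> s r Ss Rr; split => h; first exact: (reg_left Hdom (Snz s Ss) h).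
    have [n hn] := R_diff HR Rr; exact: (reg_right Hdom hn (Snz s Ss) h).
move=> L iota Hloc; exists (phi iota).
have HD : subalg_D_containing (@diffop K A).
  split => //; split; first exact: diffop_mulop.
  split; first exact: diffop_addop.
  split; first exact: diffop_oppop.
  split; first exact: diffop_scaleop.
  exact: diffop_comp.
split.
  split; first by move=> d hd; exact: (ph_d HS Hloc hd).
  split.
    move=> d hd; apply: functional_extensionality => a /=; exact: (ph_e HS Hloc hd).
  split; first by move=> u v hu hv; exact: (ph_add HS Hloc hu hv).
  split; first by move=> k u hu; exact: (ph_scale HS Hloc k hu).
  split; first by move=> u v hu hv; exact: (ph_comp HS Hloc hu hv).
  split; first exact: (ph_id HS Hloc).
  split; first by move=> u v hu hv; exact: (ph_inj HS Hloc hu hv).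
  split.
    move=> s Ss; have [w hw] := iota_inv Hloc Ss.
    exists (mulop w); split; first exact: diffop_mulop.
    rewrite (ph_mulop HS Hloc); split; apply: functional_extensionality => x;
      by rewrite /= /mulop mulrA ?hw ?(mulrC w) ?hw mul1r.
  split; first by move=> P hP; exact: (left_clause Hloc HS HA hP).
  move=> P hP; have [s [d [Ss [hd e]]]] := left_clause Hloc HS HA hP.
  have [w [hw eP]] := inv_l HS Hloc Ss e.
  have [n hn] := hd.
  have [d' [hd' e']] := right_ore_aux HD hn hd s.
  exists (s ^+ n.+1), d'; split; first exact: S_exp.
  split => //; rewrite eP.
  have hs := diffop_mulop s; have hs' := diffop_mulop (s ^+ n.+1).
  have -> : mulop w \o phi iota d \o phi iota (mulop (s ^+ n.+1))
      = mulop w \o phi iota (d \o mulop (s ^+ n.+1)) by rewrite (ph_comp HS Hloc hd hs').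
  rewrite e' (ph_comp HS Hloc hs hd') (ph_mulop HS Hloc).
  apply: functional_extensionality => x.
  by rewrite /= /mulop mulrA (mulrC w) hw mul1r.
split; first by move=> P; split; [exact: (left_to_right HR HS Hloc) | exact: (right_to_left HR HS Hloc)].
split.
  move=> P [s [r [Ss [[a ->] e]]]]; exists s, (mulop a); split => //; split => //.
  exact: (R_mulop HR).
split; first exact: (loc_diffop HR HS Hloc).
split.
  exists 1, (mulop 1); split => //; split => //; exact: (R_mulop HR).
split; first exact: (loc_add HR HS Hloc).
split; first exact: (loc_opp HR HS Hloc).
split; first exact: (loc_comp HR HS Hloc).
move=> Hall.
have RR : R (@zero_op K A).
  have -> : @zero_op K A = mulop 0.
    by apply: functional_extensionality => x; rewrite /mulop /zero_op mul0r.
  exact: (R_mulop HR).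
split.
  split.
    split; first by move=> n; exact: (R_diff HR).
    split => //; split; first by move=> m n; exact: (R_add HR).
    by move=> r n; exact: (R_comp HR).
  move=> N [Nd [N0 [Nadd Nmul]]] [n [Nn n0]].
  have hn := Nd n Nn.
  have [s [r [Ss [Rr e]]]] := Hall _ (ph_d HS Hloc hn).
  have hr := R_diff HR Rr.
  have e2 : mulop s \o n = r.
    apply: (ph_inj HS Hloc) => //; first by apply: diffop_comp => //; exact: diffop_mulop.
    by rewrite (ph_comp HS Hloc (diffop_mulop s) hn).
  exists r; split; first by rewrite -e2; apply: Nmul => //; exact: (R_mulop HR).
  split => // r0; apply: n0; rewrite r0 in e2; exact: (reg_left Hdom (Snz s Ss) e2).
split.
  split; first by move=> n; exact: (R_diff HR).
  split => //; split; first by move=> m n; exact: (R_add HR).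
  by move=> r n Rr Rn; exact: (R_comp HR).
move=> N [Nd [N0 [Nadd Nmul]]] [n [Nn n0]].
have hn := Nd n Nn.
have [s [r [Ss [Rr e]]]] := left_to_right HR HS Hloc (Hall _ (ph_d HS Hloc hn)).
have hr := R_diff HR Rr.
have e2 : n \o mulop s = r.
  apply: (ph_inj HS Hloc) => //; first by apply: diffop_comp => //; exact: diffop_mulop.
  by rewrite (ph_comp HS Hloc hn (diffop_mulop s)).
exists r; split; first by rewrite -e2; apply: Nmul => //; exact: (R_mulop HR).
split => // r0; apply: n0; rewrite r0 in e2.
have [k hk] := hn; exact: (reg_right Hdom hk (Snz s Ss) e2).
Qed.
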